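(* Let $G$ be a group and $S\subseteq G$ a locally maximal product-free set with $|S|=3$. If $\langle S\rangle$ is cyclic, then $|G|\leq 24$.
   Context: A non-empty subset $S$ of a group $G$ is product-free if $ab \notin S$ for all $a, b \in S$. It is locally maximal product-free if it is product-free and is not properly contained in any other product-free subset of $G$. $\langle S \rangle$ denotes the subgroup generated by $S$. *)

(* Defs.v *)
From mathcomp Require Import all_boot all_fingroup all_solvable.
Set Implicit Arguments. Unset Strict Implicit. Unset Printing Implicit Defensive.
Local Open Scope group_scope.

Definition product_free (gT : finGroupType) (G : {group gT}) (S : {set gT}) :=
  [/\ S \subset G, S != set0 & forall a b, a \in S -> b \in S -> a * b \notin S].

Definition locally_maximal_product_free (gT : finGroupType) (G : {group gT})
    (S : {set gT}) :=
  product_free G S /\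
  forall T : {set gT}, product_free G T -> S \subset T -> T = S.

(* Main.v *)
Require Import Defs.
From mathcomp Require Import all_boot all_fingroup all_solvable.
From mathcomp Require Import zify.
From Stdlib Require Import Classical.
Set Implicit Arguments. Unset Strict Implicit. Unset Printing Implicit Defensive.

Fixpoint allb {T} (p : T -> bool) (s : seq T) := if s is x :: s' then (if p x then allb p s' else false) else true.
Fixpoint hasb {T} (p : T -> bool) (s : seq T) := if s is x :: s' then (if p x then true else hasb p s') else false.
Lemma allbE T p s : @allb T p s = all p s.
Proof. by elim: s => //= x s ->; case: (p x). Qed.
Lemma hasbE T p s : @hasb T p s = has p s.
Proof. by elim: s => //= x s ->; case: (p x). Qed.
Definition inS (a b c i : nat) := if i == a then true else if i == b then true else i == c.
Lemma inSE a b c i : inS a b c i = (i \in [:: a; b; c]).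
Proof. by rewrite /inS !inE; case: (i == a); case: (i == b). Qed.
Definition cov n a b c i := if inS a b c i then true else if hasb (fun u => hasb (fun v => if (u+v)%%n == i then true else ((u + n - v) %% n == i)) [:: a;b;c]) [:: a;b;c] then true else inS a b c ((i+i) %% n).
Definition pf n a b c := allb (fun u => allb (fun v => ~~ inS a b c ((u+v)%%n)) [::a;b;c]) [::a;b;c].
Definition good n a b c := if a == b then false else if a == c then false else if b == c then false else if pf n a b c then (if gcdn (gcdn a b) (gcdn c n) == 1 then allb (cov n a b c) (iota 0 n) else false) else false.
Definition xok n a b c k j := if (k*j)%%n == j then if (k*k)%%n == 1%%n then allb (fun i => inS a b c ((i + k*i + j) %% n)) (iota 0 n) else false else false.
Definition concl n a b c k := ((n == 8) || (n==10) || (n==12)) && (k == n.-1) || [&& n == 6, odd a, odd b & odd c].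
Definition check := allb (fun n => allb (fun a => allb (fun b => allb (fun c => if (a < b) && (b < c) then if good n a b c then (if n <= 15 then allb (fun k => allb (fun j => if xok n a b c k j then concl n a b c k else true) (iota 0 n)) (iota 0 n) else false) else true else true) (iota 0 n)) (iota 0 n)) (iota 0 n)) (iota 0 23).
Lemma check_ok : check. Proof. vm_compute. reflexivity. Qed.

Lemma check_spec n a b c : n < 23 -> a < n -> b < n -> c < n -> a < b < c -> good n a b c ->
  n <= 15 /\ (forall k j, k < n -> j < n -> xok n a b c k j -> concl n a b c k).
Proof.
move=> n28 an bn cn abc G.
have := check_ok; rewrite /check allbE => /allP /(_ n); rewrite mem_iota /= => /(_ n28).
rewrite allbE => /allP /(_ a); rewrite mem_iota /= => /(_ an).
rewrite allbE => /allP /(_ b); rewrite mem_iota /= => /(_ bn).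
rewrite allbE => /allP /(_ c); rewrite mem_iota /= => /(_ cn).
rewrite abc G; case: (n <= 15) => //; rewrite allbE => /allP H; split => // k j kn jn X.
move: (H k); rewrite mem_iota /= => /(_ kn); rewrite allbE => /allP /(_ j).
by rewrite mem_iota /= => /(_ jn); rewrite X.
Qed.

Lemma half_cases n i a : i < n -> (i + i) %% n = a -> i = a %/ 2 \/ i = (a + n) %/ 2.
Proof.
move=> lt H.
have [le|gt] := leqP n (i + i).
  have E: (i + i) %% n = i + i - n.
    by rewrite -{1}(subnK le) modnDr modn_small // ltn_subLR; lia.
  right; rewrite -H E; lia.
left; rewrite -H modn_small //; lia.
Qed.

Lemma cov_bound n a b c : a < n -> b < n -> c < n -> (forall i, i < n -> cov n a b c i) -> n <= 22.
Proof.
move=> an bn cn H.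
pose L := [:: a; b; c] ++ [:: (a + a) %% n; (b + b) %% n; (c + c) %% n; (a + b) %% n; (a + c) %% n; (b + c) %% n]
  ++ [:: n %% n; (a + n - b) %% n; (b + n - a) %% n; (a + n - c) %% n; (c + n - a) %% n; (b + n - c) %% n; (c + n - b) %% n]
  ++ [:: a %/ 2; (a + n) %/ 2; b %/ 2; (b + n) %/ 2; c %/ 2; (c + n) %/ 2].
have -> : n = size (iota 0 n) by rewrite size_iota.
have -> : 22 = size L by [].
have P1 u v : u \in [:: a;b;c] -> v \in [:: a;b;c] -> (u+v)%%n \in L.
  move=> Hu Hv; rewrite /L !mem_cat; apply/orP; right; apply/orP; left.
  move: Hu Hv; rewrite !inE => /or3P [] /eqP -> /or3P [] /eqP ->; rewrite ?eqxx ?orbT //;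
  by rewrite addnC ?eqxx ?orbT.
have P2 u v : u \in [:: a;b;c] -> v \in [:: a;b;c] -> (u+n-v)%%n \in L.
  move=> Hu Hv; rewrite /L !mem_cat; apply/orP; right; apply/orP; right; apply/orP; left.
  move: Hu Hv; rewrite !inE => /or3P [] /eqP -> /or3P [] /eqP ->; rewrite ?eqxx ?orbT //;
  by rewrite addKn eqxx.
have P3 u : u \in [:: a;b;c] -> (u %/ 2 \in L) && ((u + n) %/ 2 \in L).
  move=> Hu; rewrite /L !mem_cat.
  by move: Hu; rewrite !inE => /or3P [] /eqP ->; rewrite !eqxx ?orbT.
apply: uniq_leq_size; first exact: iota_uniq.
move=> i; rewrite mem_iota /= => lt; move: (H i lt); rewrite /cov inSE hasbE.
case: ifP => [Hi _|_]; first by rewrite /L mem_cat Hi.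
case: ifP => [H1 _ | _].
  move: H1 => /hasP [u Hu]; rewrite hasbE => /hasP [v Hv]; case: ifP => [/eqP <- _ | _ /eqP <-]; [exact: P1 | exact: P2].
rewrite inSE => Hu.
by have /andP[Q1 Q2] := P3 _ Hu; have [] := half_cases lt (erefl _) => ->.
Qed.

Lemma goodI n a b c : a != b -> a != c -> b != c ->
  (forall u v, u \in [:: a; b; c] -> v \in [:: a; b; c] -> ~~ inS a b c ((u + v) %% n)) ->
  gcdn (gcdn a b) (gcdn c n) = 1 -> (forall i, i < n -> cov n a b c i) -> good n a b c.
Proof.
move=> /negbTE ab /negbTE ac /negbTE bc P gc H; rewrite /good ab ac bc.
have -> : pf n a b c.
  by rewrite /pf allbE; apply/allP => u Hu; rewrite allbE; apply/allP => v Hv; apply: P.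
rewrite gc eqxx allbE; apply/allP => i; rewrite mem_iota add0n => /andP[_ /H] //.
Qed.

Lemma covI n a b c i : inS a b c i \/ (exists u v, [/\ u \in [:: a; b; c], v \in [:: a; b; c] &
  ((u + v) %% n = i \/ (u + n - v) %% n = i)]) \/ inS a b c ((i + i) %% n) -> cov n a b c i.
Proof.
rewrite /cov; case: ifP => // _ [//|[[u [v [Hu Hv E]]]|->]]; last by case: ifP.
suff -> : hasb (fun u => hasb (fun v => if (u+v)%%n == i then true else ((u + n - v) %% n == i)) [:: a;b;c]) [:: a;b;c] by [].
rewrite hasbE; apply/hasP; exists u => //; rewrite hasbE; apply/hasP; exists v => //.
by case: E => ->; rewrite eqxx //; case: ifP.
Qed.

Lemma xokI n a b c k j : (k * j) %% n = j -> (k * k) %% n = 1 %% n ->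
  (forall i, i < n -> inS a b c ((i + k * i + j) %% n)) -> xok n a b c k j.
Proof.
move=> e1 e2 H; rewrite /xok e1 e2 !eqxx allbE; apply/allP => i.
by rewrite mem_iota add0n => /andP[_ /H].
Qed.

Lemma good_cov n a b c : good n a b c -> forall i, i < n -> cov n a b c i.
Proof.
rewrite /good; do 3 (case: ifP => // _); case: ifP => // _; case: ifP => // _.
by rewrite allbE => /allP H i lt; apply: H; rewrite mem_iota add0n lt.
Qed.

Local Open Scope group_scope.

Lemma cover (gT : finGroupType) (G : {group gT}) (S : {set gT}) :
  locally_maximal_product_free G S -> forall x, x \in G -> x \notin S ->
  [\/ exists a b, [/\ a \in S, b \in S & x = a * b],
      exists a b, [/\ a \in S, b \in S & x = a * b^-1],
      exists a b, [/\ a \in S, b \in S & x = a^-1 * b] | x * x \in S].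
Proof.
move=> [[SG S0 pf] mx] x xG xS.
apply: NNPP => Hn.
suff: x |: S = S by move=> E; move: xS; rewrite -E setU11.
apply: mx; last exact: subsetUr.
split.
- apply/subsetP => y; rewrite !inE => /orP[/eqP->|/(subsetP SG)] //.
- by apply/set0Pn; exists x; rewrite setU11.
move=> u v; rewrite !inE => Hu Hv; apply/negP => Huv; apply: Hn.
case/orP: Hu => [/eqP eu | uS]; case/orP: Hv => [/eqP ev | vS];
  case/orP: Huv => [/eqP e | e]; subst.
- have x1 : x = 1 by apply: (mulgI x); rewrite mulg1.
  case/set0Pn: S0 => s sS; apply: Or42; exists s, s; split => //.
  by rewrite mulgV.
- exact: Or44.
- have v1 : v = 1 by apply: (mulgI x); rewrite mulg1.
  by move: vS (pf v v vS vS); rewrite v1 mulg1 => ->.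
- by apply: Or42; exists (x * v), v; split => //; rewrite mulgK.
- have u1 : u = 1 by apply: (mulIg x); rewrite mul1g.
  by move: uS (pf u u uS uS); rewrite u1 mulg1 => ->.
- by apply: Or43; exists u, (u * x); split => //; rewrite mulKg.
- by apply: Or41; exists u, v.
- by have := pf u v uS vS; rewrite e.
Qed.

Lemma sqE (gT : finGroupType) (z : gT) : z ^+ 2 = z * z.
Proof. by rewrite expgS expg1. Qed.

Lemma six_case (gT : finGroupType) (G : {group gT}) (g : gT) (S : {set gT}) :
  #[g] = 6%N -> g \in G ->
  (forall x, x \in G -> x \notin <[g]> -> x * x \in S) ->
  (forall s, s \in S -> s = g \/ s = g ^+ 3 \/ s = g ^+ 5) -> #|G| <= 24.
Proof.
move=> og gG sq Hs.
have gpow1 m : (g ^+ m == 1) = (6 %| m)%N by rewrite -order_dvdn og.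
have gpow m : (g ^+ m = 1) <-> (6 %| m)%N by rewrite -gpow1; split => [->|/eqP].
set t := g ^+ 3.
have t1 : t != 1 by rewrite /t gpow1.
have tt : t * t = 1 by rewrite /t -expgD; apply/gpow.
have cyc z : z \in <[g]> -> exists2 i, (i < 6)%N & z = g ^+ i.
  by case/cyclePmin => i; rewrite og => lt ->; exists i.
have F1 z : z \in G -> z ^+ 12 = 1.
  move=> zG; case: (boolP (z \in <[g]>)) => [/cyc [i _ ->] | zn].
    by rewrite -expgM; apply/gpow; rewrite dvdn_mull.
  rewrite (_ : 12 = 2 * 6)%N // expgM sqE.
  by have [->|[->|->]] := Hs _ (sq z zG zn); rewrite -?expgM; apply/gpow.
have F4 z : z \in G -> z ^+ 4 = 1 -> (z * z = 1 -> z = 1 \/ z = t) /\ (z * z = 1 \/ z * z = t).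
  move=> zG; case: (boolP (z \in <[g]>)) => [/cyc [i lt ->] | zn].
    rewrite -expgM -expgD => /gpow.
    case: i lt => [|[|[|[|[|[|i]]]]]] //= _ _.
      by split => [_|]; left; rewrite ?expg0 ?mulg1.
    by split => [_|]; [right | left; apply/gpow].
  have e4 : z ^+ 4 = (z * z) ^+ 2 by rewrite -sqE -expgM.
  rewrite e4; have [->|[->|->]] := Hs _ (sq z zG zn); rewrite -?expgM; move/gpow => //= _.
  by split; [move=> E; move: t1; rewrite /t E eqxx | right].
have F3 z : z \in G -> z ^+ 3 = 1 -> z \in <[g ^+ 2]>.
  move=> zG; case: (boolP (z \in <[g]>)) => [/cyc [i lt ->] | zn].
    rewrite -expgM => /gpow.
    case: i lt => [|[|[|[|[|[|i]]]]]] //= _ _; rewrite ?expg0 ?group1 //.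
      by rewrite cycle_id.
    by rewrite (_ : 4 = 2 * 2)%N // expgM mem_cycle.
  move=> z3; have : (z * z) ^+ 3 = 1 by rewrite -sqE -expgM mulnC expgM z3 expg1n.
  by have [->|[->|->]] := Hs _ (sq z zG zn); rewrite -?expgM; move/gpow.
have og2 : #[g ^+ 2] = 3%N by rewrite orderXgcd og.
have nat2 d : (d %| 12)%N -> 2.-nat d -> (d %| 4)%N.
  move=> dv nd; have le := dvdn_leq (isT : (0 < 12)%N) dv.
  have : all (fun d => (d %| 12) ==> 2.-nat d ==> (d %| 4))%N (iota 0 13) by vm_compute.
  by move/allP/(_ d); rewrite mem_iota /= ltnS le dv nd => /(_ isT).
have nat3 d : (d %| 12)%N -> 3.-nat d -> (d %| 3)%N.
  move=> dv nd; have le := dvdn_leq (isT : (0 < 12)%N) dv.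
  have : all (fun d => (d %| 12) ==> 3.-nat d ==> (d %| 3))%N (iota 0 13) by vm_compute.
  by move/allP/(_ d); rewrite mem_iota /= ltnS le dv nd => /(_ isT).
have ord12 z : z \in G -> (#[z] %| 12)%N by move=> zG; rewrite order_dvdn F1.
clearbody t.
have [P sylP] := Sylow_exists 2 G.
have pP := pHall_pgroup sylP; have sPG := pHall_sub sylP.
have P4 w : w \in P -> w ^+ 4 = 1.
  move=> wP; have wG := subsetP sPG w wP.
  by apply/eqP; rewrite -order_dvdn; apply: nat2 (ord12 _ wG) (mem_p_elt pP wP).
have cP : #|P| <= 8.
  case: (boolP (P \subset [set 1; t])) => [sub | /subsetPn [a aP an]].
    by apply: leq_trans (subset_leq_card sub) _; rewrite cards2; case: (_ != _).
  have aG := subsetP sPG a aP.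
  have eP w : w \in P -> (w * w = 1 -> w = 1 \/ w = t) /\ (w * w = 1 \/ w * w = t).
    by move=> wP; apply: F4 (subsetP sPG w wP) (P4 w wP).
  have aa : a * a = t.
    have [h1 [h2|//]] := eP a aP.
    by move: an; rewrite !inE; case: (h1 h2) => ->; rewrite eqxx ?orbT.
  set T2 := [set 1; t].
  have T2E e : e \in T2 -> e = 1 \/ e = t by rewrite !inE => /orP [] /eqP ->; [left|right].
  have T21 : 1 \in T2 by rewrite !inE eqxx.
  have T2t : t \in T2 by rewrite !inE eqxx orbT.
  have sqT w : w \in P -> w * w \in T2.
    by move=> wP; have [_ [->|->]] := eP w wP.
  have tcomm w : w \in P -> commute t w.
    move=> wP; have [h1 [/h1 [] -> | <-]] := eP w wP.
    - exact: commute1.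
    - exact: commute_refl.
    - by rewrite /commute mulgA.
  have T2comm e w : e \in T2 -> w \in P -> commute e w.
    by move=> /T2E [] -> wP; [exact: commute_sym (commute1 _) | exact: tcomm].
  have T2mul e f : e \in T2 -> f \in T2 -> e * f \in T2.
    by move=> /T2E [] -> /T2E [] ->; rewrite ?mul1g ?mulg1 ?tt.
  have T2sq e : e \in T2 -> e * e = 1.
    by move=> /T2E [] ->; rewrite ?mulg1.
  have Csub : 'C_P[a] \subset [:: 1; t; a; a^-1].
    apply/subsetP => w; rewrite inE => /andP [wP /cent1P cwa].
    rewrite !inE; have [h1 [/h1 [] -> | wwt]] := eP w wP.
    - by rewrite eqxx.
    - by rewrite eqxx orbT.
    have awP : a * w \in P by rewrite groupM.
    have : (a * w) * (a * w) = 1.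
      by rewrite mulgA -(mulgA a w a) cwa !mulgA -(mulgA (a * a)) aa wwt tt.
    have [h3 _] := eP _ awP; move/h3 => [] e.
      by rewrite -(mulKg a w) e mulg1 eqxx !orbT.
    by move: e; rewrite -aa => /mulgI ->; rewrite eqxx !orbT.
  have cC : #|'C_P[a]| <= 4.
    by apply: leq_trans (subset_leq_card Csub) _; apply: card_size.
  have Ksub : a ^: P \subset [:: a; a * t].
    apply/subsetP => y /imsetP [w wP ->].
    rewrite conjgE.
    move: (sqT w wP) (sqT (a * w) (groupM aP wP)).
    move eE : (w * w) => e eT; move fE : (a * w * (a * w)) => f fT.
    have winv : w^-1 = w * e.
      by apply: (mulgI w); rewrite mulgV mulgA eE T2sq.
    have wawE : w * a * w = a^-1 * f.
      by apply: (mulgI a); rewrite mulKVg -fE !mulgA.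
    have ainv : a^-1 = a * t.
      by apply: (mulgI a); rewrite mulgV mulgA aa tt.
    have -> : w^-1 * (a * w) = a * (e * t * f).
      have -> : w^-1 * (a * w) = e * (w * a * w).
        by rewrite winv -(T2comm e w eT wP) !mulgA.
      by rewrite wawE ainv !mulgA (T2comm e a eT aP).
    have := T2mul _ _ (T2mul _ _ eT T2t) fT; move/T2E => [] ->;
      by rewrite ?mulg1 !inE eqxx ?orbT.
  have cK : #|a ^: P| <= 2.
    by apply: leq_trans (subset_leq_card Ksub) _; apply: card_size.
  rewrite -(Lagrange (subsetIl P 'C[a])) index_cent1.
  exact: leq_mul cC cK.
have [Q sylQ] := Sylow_exists 3 G.
have pQ := pHall_pgroup sylQ; have sQG := pHall_sub sylQ.
have cQ : #|Q| <= 3.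
  have sub : Q \subset <[g ^+ 2]>.
    apply/subsetP => w wQ; have wG := subsetP sQG w wQ.
    apply: (F3 _ wG); apply/eqP; rewrite -order_dvdn.
    exact: nat3 (ord12 _ wG) (mem_p_elt pQ wQ).
  by rewrite -[3]og2; apply: subset_leq_card.
have : (#|G| %| 24)%N.
  apply/dvdn_partP => // p; rewrite mem_primes => /and3P [pr _ pdiv].
  have [x xG ox] := Cauchy pr pdiv.
  have p12 : (p %| 12)%N by rewrite -ox ord12.
  have p23 : (p == 2) || (p == 3).
    have le := dvdn_leq (isT : (0 < 12)%N) p12.
    have : all (fun p => prime p ==> (p %| 12) ==> (p == 2) || (p == 3))%N (iota 0 13) by vm_compute.
    by move/allP/(_ p); rewrite mem_iota /= ltnS le pr p12 => /(_ isT).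
  case/orP: p23 => /eqP ->.
    rewrite (card_Hall sylP) p_part in cP; rewrite p_part.
    have le : (logn 2 #|G| <= 3)%N.
      rewrite leqNgt; apply/negP => lt; move: cP; rewrite leqNgt => /negP; apply.
      by apply: leq_trans (leq_pexp2l _ lt); [| ].
    by apply: dvdn_trans (dvdn_exp2l 2 le) _.
  rewrite (card_Hall sylQ) p_part in cQ; rewrite p_part.
  have le : (logn 3 #|G| <= 1)%N.
    rewrite leqNgt; apply/negP => lt; move: cQ; rewrite leqNgt => /negP; apply.
    by apply: leq_trans (leq_pexp2l _ lt); [| ].
  by apply: dvdn_trans (dvdn_exp2l 3 le) _.
by move/dvdn_leq; apply.
Qed.

Unset Implicit Arguments.

Theorem proposition2p1 (gT : finGroupType) (G : {group gT}) (S : {set gT}) :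
  locally_maximal_product_free G S -> #|S| = 3 -> cyclic <<S>> -> #|G| <= 24.
Proof.
move=> LM S3 cycH.
have [[SG S0 pf] _] := LM.
case/cyclicP: cycH => g Hg.
have HG : <[g]> \subset G by rewrite -Hg gen_subG.
have gG : g \in G by rewrite -cycle_subG.
have SH : S \subset <[g]> by rewrite -Hg subset_gen.
have n0 : 0 < #[g] := order_gt0 g.
move En : #[g] => n; rewrite En in n0.
have [a [b [c [an bn cn [ES [dab dac dbc]]]]]] : exists a b c, [/\ (a < n)%N, (b < n)%N, (c < n)%N &
   S = [set g ^+ a; g ^+ b; g ^+ c] /\ [/\ a != b, a != c & b != c]].
  have := S3; rewrite cardE; case E: (enum S) => [|s1 [|s2 [|s3 [|]]]] //= _.
  have U := enum_uniq (mem S); rewrite E in U.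
  have mS s : (s \in S) = (s \in [:: s1; s2; s3]) by rewrite -E mem_enum.
  have gs s : s \in S -> {i | (i < n)%N & s = g ^+ i}.
    by move=> sS; rewrite -En; apply: cyclePmin (subsetP SH s sS).
  have s1S : s1 \in S by rewrite mS inE eqxx.
  have s2S : s2 \in S by rewrite mS !inE eqxx orbT.
  have s3S : s3 \in S by rewrite mS !inE eqxx !orbT.
  have [a an ea] := gs s1 s1S.
  have [b bn eb] := gs s2 s2S.
  have [c cn ec] := gs s3 s3S.
  exists a, b, c; split => //; split.
    by apply/setP => y; rewrite mS !inE -ea -eb -ec orbA.
  move: U; rewrite /= !inE ea eb ec; split; apply/eqP => e; move: U; rewrite e eqxx /= ?orbT ?andbF //.
have ord : #[g] = n by [].
wlog abclt : a b c an bn cn ES dab dac dbc / ((a < b) && (b < c))%N.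
  move=> W.
  have Sw x y z : (x < n)%N -> (y < n)%N -> (z < n)%N -> S = [set g ^+ x; g ^+ y; g ^+ z] ->
      ((x < y) && (y < z))%N -> #|G| <= 24.
    move=> xn yn zn E l; apply: (W x y z) => //; move: l => /andP [l1 l2];
      rewrite neq_ltn ?l1 ?l2 ?(ltn_trans l1 l2) ?orbT //.
  have Pm x y z : S = [set g ^+ x; g ^+ y; g ^+ z] ->
      [/\ S = [set g ^+ y; g ^+ x; g ^+ z], S = [set g ^+ x; g ^+ z; g ^+ y] &
          S = [set g ^+ z; g ^+ y; g ^+ x]].
    by move=> E; split; apply/setP => w; rewrite E !inE; case: (w == g ^+ x); case: (w == g ^+ y); case: (w == g ^+ z).
  have [E1 E2 E3] := Pm _ _ _ ES.
  have [E4 _ _] := Pm _ _ _ E2.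
  have [E5 _ _] := Pm _ _ _ E3.
  case: (ltngtP a b) => [ab|ba|e]; last by rewrite e eqxx in dab.
  all: case: (ltngtP b c) => [bc|cb|e]; last (by rewrite e eqxx in dbc).
  all: case: (ltngtP a c) => [ac|ca|e]; last (by rewrite e eqxx in dac).
  all: try (exfalso; lia).
  - by apply: (Sw a b c) => //; rewrite ab bc.
  - by apply: (Sw a c b) => //; rewrite ac cb.
  - by apply: (Sw c a b) => //; rewrite ca ab.
  - by apply: (Sw b a c) => //; rewrite ba ac.
  - by apply: (Sw b c a) => //; rewrite bc ca.
  - by apply: (Sw c b a) => //; rewrite cb ba.
have memS i : (g ^+ i \in S) = inS a b c (i %% n).
  by rewrite ES inSE !inE !eq_expg_mod_order En (modn_small an) (modn_small bn) (modn_small cn) orbA.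
have gS u : u \in [:: a; b; c] -> g ^+ u \in S.
  by rewrite ES !inE => /or3P [] /eqP ->; rewrite eqxx ?orbT.
have Sexp s : s \in S -> exists2 u, u \in [:: a; b; c] & s = g ^+ u.
  by rewrite ES !inE -orbA => /or3P [] /eqP ->; [exists a | exists b | exists c]; rewrite // !inE eqxx ?orbT.
have gn : g ^+ n = 1 by rewrite -En expg_order.
have ginv u v : (v <= n)%N -> g ^+ u * (g ^+ v)^-1 = g ^+ (u + n - v).
  move=> vn; have E : g ^+ (u + n - v) * g ^+ v = g ^+ u.
    by rewrite -expgD subnK ?expgD ?gn ?mulg1 // (leq_trans vn) // leq_addl.
  by rewrite -E mulgK.
have expeq p q : (p < n)%N -> g ^+ p = g ^+ q -> p = q %% n.
  by move=> lt /eqP; rewrite eq_expg_mod_order En (modn_small lt) => /eqP.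
have Hcomm x y : x \in <[g]> -> y \in <[g]> -> commute x y.
  by move=> /cycleP [k1 ->] /cycleP [k2 ->]; apply: commuteX2.
have gd : good n a b c.
  apply: goodI => //.
  - move=> u v Hu Hv; rewrite -memS expgD; exact: pf (gS u Hu) (gS v Hv).
  - set d := gcdn (gcdn a b) (gcdn c n).
    have dn : (d %| n)%N by apply: dvdn_trans (dvdn_gcdr _ _) (dvdn_gcdr _ _).
    have dabc u : u \in [:: a; b; c] -> (d %| u)%N.
      rewrite !inE => /or3P [] /eqP ->; rewrite /d.
      + by apply: dvdn_trans (dvdn_gcdl _ _) (dvdn_gcdl _ _).
      + by apply: dvdn_trans (dvdn_gcdl _ _) (dvdn_gcdr _ _).
      + by apply: dvdn_trans (dvdn_gcdr _ _) (dvdn_gcdl _ _).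
    have sub : S \subset <[g ^+ d]>.
      apply/subsetP => s /Sexp [u Hu ->]; have du := dabc u Hu.
      by rewrite -(divnK du) mulnC expgM mem_cycle.
    have sub2 : <[g]> \subset <[g ^+ d]> by rewrite -Hg gen_subG.
    have := subset_leq_card sub2; rewrite -!orderE orderXgcd En (gcdn_idPr dn).
    have d0 : (0 < d)%N := dvdn_gt0 n0 dn.
    move=> le; apply/eqP; rewrite eqn_leq d0 andbT leqNgt; apply/negP => d1.
    by have := ltn_Pdiv d1 n0; rewrite ltnNge le.
  - move=> i lt; apply: covI.
    have iG : g ^+ i \in G by rewrite (subsetP HG) // mem_cycle.
    case: (boolP (g ^+ i \in S)) => [iS | iS].
      by left; rewrite memS modn_small in iS.
    have [[u [v [uS vS e]]] | [u [v [uS vS e]]] | [u [v [uS vS e]]] | e] := cover LM iG iS.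
    - right; left; have [u' u'abc eu] := Sexp u uS; have [v' v'abc ev] := Sexp v vS.
      exists u', v'; split => //; left; apply/esym.
      by apply: expeq => //; rewrite e eu ev -expgD.
    - right; left; have [u' u'abc eu] := Sexp u uS; have [v' v'abc ev] := Sexp v vS.
      exists u', v'; split => //; right; apply/esym.
      have v'n : (v' <= n)%N by move: v'abc; rewrite !inE => /or3P [] /eqP ->; apply: ltnW.
      by apply: expeq => //; rewrite e eu ev ginv.
    - right; left; have [u' u'abc eu] := Sexp u uS; have [v' v'abc ev] := Sexp v vS.
      exists v', u'; split => //; right; apply/esym.
      have u'n : (u' <= n)%N by move: u'abc; rewrite !inE => /or3P [] /eqP ->; apply: ltnW.
      apply: expeq => //; rewrite e eu ev -ginv //.
      by apply: Hcomm; rewrite ?groupV mem_cycle.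
    - by right; right; rewrite -memS expgD.
have n28 : (n < 23)%N by apply: (cov_bound an bn cn (good_cov gd)).
have [n15 xs] := check_spec n28 an bn cn abclt gd.
case: (boolP (G \subset <[g]>)) => [sub | /subsetPn [x0 x0G x0n]].
  apply: leq_trans (subset_leq_card sub) _; rewrite -orderE En.
  by apply: leq_trans n15 _.
have sq y : y \in G -> y \notin <[g]> -> y * y \in S.
  move=> yG yn; have yS : y \notin S by apply: contra yn; apply: (subsetP SH).
  have [[u [v [uS vS e]]]|[u [v [uS vS e]]]|[u [v [uS vS e]]]|//] := cover LM yG yS;
    have uH := subsetP SH u uS; have vH := subsetP SH v vS;
    by case/negP: yn; rewrite e groupM ?groupV.
have key x : x \in G -> x \notin <[g]> ->
    exists k, [/\ (k < n)%N, g ^ x^-1 = g ^+ k & concl n a b c k].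
  move=> xG xn.
  have xx := sq x xG xn.
  have gxn : g * x \notin <[g]>.
    by apply: contra xn => h; rewrite -(mulKg g x) groupM ?groupV ?cycle_id.
  have gxG : g * x \in G by rewrite groupM.
  have gxgx := sq _ gxG gxn.
  have conjE : g ^ x^-1 = x * g * x^-1 by rewrite conjgE invgK mulgA.
  have cg : g ^ x^-1 \in <[g]>.
    have -> : g ^ x^-1 = g^-1 * ((g * x) * (g * x)) * (x * x)^-1.
      by rewrite conjE invMg !mulgA mulVg mul1g mulgK.
    apply: groupM; [apply: groupM; [by rewrite groupV cycle_id | exact: subsetP SH _ gxgx] | by rewrite groupV (subsetP SH _ xx)].
  have [k kn ek] := cyclePmin cg; rewrite En in kn.
  have [j jn ej] := cyclePmin (subsetP SH _ xx); rewrite En in jn.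
  have cp i : (g ^+ i) ^ x^-1 = g ^+ (k * i) by rewrite conjXg ek -expgM.
  exists k; split => //; apply: (xs k j kn jn); apply: xokI.
  - have : (x * x) ^ x^-1 = x * x by rewrite conjgE invgK !mulgA mulgK.
    rewrite ej cp => /eqP; rewrite eq_expg_mod_order En (modn_small jn) => /eqP //.
  - have cj : commute (g ^+ j) g by rewrite -{2}(expg1 g); apply: commuteX2.
    have : g ^ (x * x)^-1 = g by rewrite ej conjgE invgK mulgA cj mulgK.
    rewrite invMg conjgM ek cp -{2}(expg1 g) => /eqP.
    by rewrite eq_expg_mod_order En => /eqP.
  - move=> i lt; rewrite -memS.
    have hxG : g ^+ i * x \in G by rewrite groupM // (subsetP HG) // mem_cycle.
    have hxn : g ^+ i * x \notin <[g]>.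
      by apply: contra xn => h; rewrite -(mulKg (g ^+ i) x) groupM ?groupV ?mem_cycle.
    have := sq _ hxG hxn.
    have -> : (g ^+ i * x) * (g ^+ i * x) = g ^+ i * (g ^+ i) ^ x^-1 * (x * x).
      by rewrite conjgE invgK !mulgA mulgKV.
    by rewrite cp ej -!expgD.
have [k0 [k0n ek0 cc0]] := key x0 x0G x0n.
case: (eqVneq n 6) => [n6 | n6].
  move: cc0; rewrite /concl n6 /= => /and3P [oa ob oc].
  apply: (six_case (g := g) (S := S)) => //; first by rewrite En.
  move=> s /Sexp [u Hu ->].
  have : (u < 6)%N && odd u.
    by move: Hu; rewrite !inE -n6 => /or3P [] /eqP ->; apply/andP.
  by case: u {Hu} => [|[|[|[|[|[|u]]]]]] //= _; [left | right; left | right; right]; rewrite ?expg1.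
have n12 : (8 <= n <= 12)%N.
  by move: cc0; rewrite /concl (negbTE n6) andFb orbF => /andP [] /orP [/orP [] |] /eqP ->.
have inv x : x \in G -> x \notin <[g]> -> g ^ x^-1 = g^-1.
  move=> xG xn; have [k [kn ek cc]] := key x xG xn.
  move: cc; rewrite /concl (negbTE n6) andFb orbF => /andP [_ /eqP ek2].
  by rewrite ek ek2 -[LHS](mulgK g) -expgSr prednK // gn mul1g.
have gx0 : g ^ x0 = g^-1.
  have e := inv x0 x0G x0n.
  have h := conjgKV x0 g; rewrite e conjVg in h.
  by apply: invg_inj; rewrite h invgK.
have sub : G \subset <[g]> :|: <[g]> :* x0.
  apply/subsetP => y yG; rewrite inE; case: (boolP (y \in <[g]>)) => //= yn.
  rewrite mem_rcoset; apply/negPn/negP => zn.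
  have zG : y * x0^-1 \in G by rewrite groupM ?groupV.
  have e1 := inv _ zG zn.
  move: e1; rewrite invMg invgK conjgM gx0 conjVg (inv y yG yn) invgK => gg.
  have : g ^+ 2 == 1 by rewrite sqE {1}gg mulVg.
  rewrite -order_dvdn En => /(dvdn_leq (isT : (0 < 2)%N)) le.
  by move: n12; rewrite leqNgt (leq_ltn_trans le).
apply: leq_trans (subset_leq_card sub) _.
rewrite cardsU card_rcoset -orderE En.
apply: leq_trans (leq_subr _ _) _.
by move: n12 => /andP [_ h]; apply: (leq_add h h).
Qed.
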